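(* Let $d\ge1$, $f\ge1$ and $q\ge 2f+1$ be integers, and let $H_1=\{1,\dots,q-f\}$ and $H_2=\{q+1,\dots,2q-f\}$. Then for all $(x_1,\dots,x_{2q})\in(\mathbb{R}^d)^{2q}$, $$\Big\|\mathrm{MDA}_f(x_1,\dots,x_q)-\mathrm{MDA}_f(x_{q+1},\dots,x_{2q})\Big\|_2\le 3\max_{(i,j)\in(H_1\cup H_2)^2}\|x_i-x_j\|_2 .$$
   Context: Minimum–Diameter Averaging: for integers $f\ge 0$, $q\ge 2f+1$ and vectors $x_1,\dots,x_q\in\mathbb{R}^d$, $\mathrm{MDA}_f(x_1,\dots,x_q)$ is defined as follows: among all index sets $I\subset\{1,\dots,q\}$ with $|I|=q-f$, choose one, $I^*$, minimizing $\max_{i,j\in I}\|x_i-x_j\|_2$ (ties broken arbitrarily); then $\mathrm{MDA}_f(x_1,\dots,x_q)=\frac{1}{q-f}\sum_{i\in I^*}x_i$. *)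

(* Defs.v *)
(* Vectors of R^d are row vectors 'rV[R]_d over an arbitrary
   real closed field R (so that Num.sqrt is available); this generalizes R = reals. *)
From HB Require Import structures.
From mathcomp Require Import all_boot all_order all_algebra.
Set Implicit Arguments. Unset Strict Implicit. Unset Printing Implicit Defensive.
Import Order.TTheory GRing.Theory Num.Theory.
Local Open Scope ring_scope.

Definition norm2 (R : rcfType) (d : nat) (v : 'rV[R]_d) : R :=
  Num.sqrt (\sum_(k < d) v 0 k ^+ 2).

(* max_{i,j in I} ||x_i - x_j||_2 ; 0 for empty I (norms are >= 0) *)
Definition diam (R : rcfType) (d n : nat) (x : 'I_n -> 'rV[R]_d) (I : pred 'I_n) : R :=
  \big[Num.max/0]_(i | I i) \big[Num.max/0]_(j | I j) norm2 (x i - x j).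

(* y is a value of MDA_f(x_1,...,x_q) for SOME admissible tie-breaking:
   y is the average over an index set I* of size q - f of minimal diameter. *)
Definition is_MDA (R : rcfType) (d f q : nat) (x : 'I_q -> 'rV[R]_d) (y : 'rV[R]_d) : Prop :=
  exists I : {set 'I_q},
    [/\ #|I| = (q - f)%N,
        (forall J : {set 'I_q}, #|J| = (q - f)%N -> diam x (mem I) <= diam x (mem J))
      & y = ((q - f)%:R)^-1 *: \sum_(i in I) x i].

(* Main.v *)
Require Import Defs.
From HB Require Import structures.
From mathcomp Require Import all_boot all_order all_algebra.
From mathcomp Require Import zify ring lra.
Import Order.TTheory GRing.Theory Num.Theory.
Local Open Scope ring_scope.

Section N.
Variables (R : rcfType) (d : nat).
Implicit Types u v : 'rV[R]_d.

Lemma CS (a b : 'I_d -> R) :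
  (\sum_k a k * b k) ^+ 2 <= (\sum_k a k ^+ 2) * (\sum_k b k ^+ 2).
Proof.
set A := \sum_k a k ^+ 2; set B := \sum_k b k ^+ 2; set C := \sum_k a k * b k.
have E : \sum_k \sum_l (a k * b l - a l * b k) ^+ 2
   = \sum_k (a k ^+ 2 * B + b k ^+ 2 * A - 2 * (a k * b k) * C).
  apply: eq_bigr => k _.
  rewrite /A /B /C !mulr_sumr -!big_split -sumrB /=.
  by apply: eq_bigr => l _; ring.
have E2 : \sum_k (a k ^+ 2 * B + b k ^+ 2 * A - 2 * (a k * b k) * C)
   = 2 * (A * B - C ^+ 2).
  rewrite sumrB big_split /= -!mulr_suml -mulr_sumr -/A -/B -/C. ring.
have : 0 <= \sum_k \sum_l (a k * b l - a l * b k) ^+ 2.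
  by apply: sumr_ge0 => k _; apply: sumr_ge0 => l _; apply: sqr_ge0.
rewrite E E2 pmulr_rge0 // subr_ge0 //.
Qed.

Lemma norm2_ge0 v : 0 <= norm2 v.
Proof. exact: sqrtr_ge0. Qed.

Lemma norm2D u v : norm2 (u + v) <= norm2 u + norm2 v.
Proof.
rewrite /norm2.
set A := \sum_k u 0 k ^+ 2; set B := \sum_k v 0 k ^+ 2.
set C := \sum_k u 0 k * v 0 k.
have hA : 0 <= A by apply: sumr_ge0 => k _; apply: sqr_ge0.
have hB : 0 <= B by apply: sumr_ge0 => k _; apply: sqr_ge0.
have E : \sum_k (u + v) 0 k ^+ 2 = A + B + 2 * C.
  rewrite /A /B /C mulr_sumr -!big_split /=; apply: eq_bigr => k _.
  rewrite mxE; ring.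
have hC : C <= Num.sqrt A * Num.sqrt B.
  rewrite -sqrtrM //; apply: le_trans (ler_norm C) _.
  rewrite -sqrtr_sqr ler_sqrt; last by apply: mulr_ge0.
  exact: CS.
rewrite E -(ger0_norm (addr_ge0 (sqrtr_ge0 A) (sqrtr_ge0 B))) -sqrtr_sqr.
rewrite ler_sqrt; last exact: sqr_ge0.
rewrite sqrrD !sqr_sqrtr //.
have : 2 * C <= 2 * (Num.sqrt A * Num.sqrt B) by rewrite ler_pM2l.
rewrite mulr2n mulrA mulr2n; lra.
Qed.

Lemma norm2Z c v : norm2 (c *: v) = `|c| * norm2 v.
Proof.
rewrite /norm2.
have -> : \sum_k (c *: v) 0 k ^+ 2 = c ^+ 2 * \sum_k v 0 k ^+ 2.
  by rewrite mulr_sumr; apply: eq_bigr => k _; rewrite mxE exprMn.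
by rewrite sqrtrM ?sqr_ge0 // sqrtr_sqr.
Qed.

Lemma norm2N v : norm2 (- v) = norm2 v.
Proof. by rewrite -scaleN1r norm2Z normrN normr1 mul1r. Qed.

Lemma norm2_sub u v : norm2 (u - v) = norm2 (v - u).
Proof. by rewrite -norm2N opprB. Qed.

Lemma norm2_0 : norm2 (0 : 'rV[R]_d) = 0.
Proof.
rewrite /norm2 big1 ?sqrtr0 // => k _; by rewrite mxE expr0n.
Qed.

Lemma norm2_sum (I : finType) (P : pred I) (g : I -> 'rV[R]_d) :
  norm2 (\sum_(i | P i) g i) <= \sum_(i | P i) norm2 (g i).
Proof.
elim/big_rec2: _ => [|i y1 y2 _ H]; first by rewrite norm2_0.
apply: le_trans (norm2D _ _) _; by rewrite lerD2l.
Qed.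
End N.

Section D.
Variables (R : rcfType) (d n : nat) (x : 'I_n -> 'rV[R]_d).

Lemma diam_ge (I : pred 'I_n) i j : I i -> I j -> norm2 (x i - x j) <= diam x I.
Proof.
move=> Ii Ij; rewrite /diam (bigD1 i) //= le_max; apply/orP; left.
by rewrite (bigD1 j) //= le_max lexx.
Qed.

Lemma diam_le (I : pred 'I_n) (c : R) : 0 <= c ->
  (forall i j, I i -> I j -> norm2 (x i - x j) <= c) -> diam x I <= c.
Proof.
move=> c0 H; rewrite /diam; elim/big_ind: _ => //.
  by move=> a b ha hb; rewrite ge_max ha hb.
move=> i Ii; elim/big_ind: _ => //.
  by move=> a b ha hb; rewrite ge_max ha hb.
by move=> j Ij; apply: H.
Qed.

Lemma diam_ge0 (I : pred 'I_n) : 0 <= diam x I.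
Proof.
rewrite /diam; elim/big_ind: _ => //.
  by move=> a b ha hb; rewrite le_max ha.
move=> i Ii; elim/big_ind: _ => //.
  by move=> a b ha hb; rewrite le_max ha.
by move=> j Ij; apply: norm2_ge0.
Qed.

Lemma avg_bound (I : {set 'I_n}) (m : nat) (z : 'rV[R]_d) (D : R) :
  #|I| = m -> (0 < m)%N -> (forall i, i \in I -> norm2 (x i - z) <= D) ->
  norm2 ((m%:R)^-1 *: \sum_(i in I) x i - z) <= D.
Proof.
move=> cI m0 H.
have mR : (m%:R : R) != 0 by rewrite pnatr_eq0 -lt0n.
have -> : z = (m%:R)^-1 *: \sum_(i in I) z.
  by rewrite sumr_const cI -scaler_nat scalerA mulVf // scale1r.
rewrite -scalerBr -sumrB norm2Z ger0_norm ?invr_ge0 ?ler0n //.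
rewrite ler_pdivrMl ?ltr0n //.
apply: le_trans; first exact: norm2_sum.
apply: le_trans (ler_sum _ (fun i Ii => H i Ii)) _.
by rewrite sumr_const cI mulr_natl.
Qed.
End D.

Lemma side (R : rcfType) d f q (hq : (2 * f + 1 <= q)%N) (g : 'I_q -> 'rV[R]_d) y (D : R) :
  is_MDA f g y -> 0 <= D ->
  (forall i j : 'I_q, (i < q - f)%N -> (j < q - f)%N -> norm2 (g i - g j) <= D) ->
  exists a : 'I_q, (a < q - f)%N /\ norm2 (y - g a) <= D.
Proof.
move=> [I [cI minI ->]] D0 H.
have le : (q - f <= q)%N by apply: leq_subr.
pose J := [set widen_ord le i | i in 'I_(q - f)].
have winj : injective (widen_ord le) by move=> i j h; apply: val_inj; exact: (congr1 val h).
have cJ : #|J| = (q - f)%N by rewrite card_imset // card_ord.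
have inJ : forall i, i \in J -> (i < q - f)%N.
  by move=> i /imsetP [j _ ->] /=.
have dI : diam g (mem I) <= D.
  apply: le_trans (minI J cJ) _; apply: diam_le => // i j /= hi hj.
  by apply: H; apply: inJ.
have : (0 < #|I :&: J|)%N.
  have := cardsUI I J; have := max_card (I :|: J); rewrite card_ord cI cJ.
  lia.
rewrite card_gt0 => /set0Pn [a]; rewrite inE => /andP [aI aJ].
exists a; split; first exact: inJ.
have m0 : (0 < q - f)%N by lia.
apply: avg_bound => // i iI.
by apply: le_trans dI; apply: diam_ge.
Qed.
Theorem mainTheorem2 (R : rcfType) (d f q : nat)
  (hd : (1 <= d)%N) (hf : (1 <= f)%N) (hq : (2 * f + 1 <= q)%N)
  (x : 'I_(q + q) -> 'rV[R]_d) (y1 y2 : 'rV[R]_d) :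
  is_MDA f (fun i : 'I_q => x (lshift q i)) y1 ->
  is_MDA f (fun i : 'I_q => x (rshift q i)) y2 ->
  norm2 (y1 - y2) <=
    3 * diam x (fun k : 'I_(q + q) => ((k < q - f) || ((q <= k) && (k < 2 * q - f))))%N.
Proof.
set H := (fun k : 'I_(q + q) => _).
set D := diam x H.
have D0 : 0 <= D by apply: diam_ge0.
have Hl : forall i : 'I_q, (i < q - f)%N -> H (lshift q i).
  by move=> i hi; rewrite /H /= hi.
have Hr : forall i : 'I_q, (i < q - f)%N -> H (rshift q i).
  move=> i hi; rewrite /H /=; apply/orP; right; apply/andP; split; lia.
move=> M1 M2.
have [a [ha h1]] := @side _ _ _ _ hq _ _ _ M1 D0 (fun i j hi hj => @diam_ge _ _ _ x H _ _ (Hl i hi) (Hl j hj)).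
have [b [hb h2]] := @side _ _ _ _ hq _ _ _ M2 D0 (fun i j hi hj => @diam_ge _ _ _ x H _ _ (Hr i hi) (Hr j hj)).
have h3 : norm2 (x (lshift q a) - x (rshift q b)) <= D by apply: diam_ge; auto.
have -> : y1 - y2 = (y1 - x (lshift q a)) + (x (lshift q a) - x (rshift q b))
     + (x (rshift q b) - y2).
  by rewrite !addrA !subrK.
rewrite norm2_sub in h2.
apply: le_trans; first exact: norm2D.
apply: le_trans; first by apply: lerD; first exact: norm2D; exact: h2.
lra.
Qed.
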